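(* For any real $r \in [0,1]$, the sequence $\left(c_q^{1/(q+r)}\right)_{q \geq 2}$ is strictly decreasing.
   Context: For integers $q \geq 1$, $c_q := \sqrt{\lfloor (q+2)^2/4 \rfloor}$. *)

(* Defs.v *)
From Stdlib Require Import Reals Lra Lia.
Open Scope R_scope.

Definition c (q : nat) : R := sqrt (INR (Nat.div ((q + 2) * (q + 2)) 4)).

(* the sequence term c_q^(1/(q+r)); c_q >= sqrt 2 > 0 for q >= 1, so Rpower is the real power *)
Definition a (r : R) (q : nat) : R := Rpower (c q) (1 / (INR q + r)).

(* Main.v *)
Require Import Defs.
From Stdlib Require Import Reals.
From Stdlib Require Import Lra Lia.
Open Scope R_scope.

Lemma exp_pow_k (t : R) (k : nat) : exp (INR k * t) = exp t ^ k.
Proof.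
  induction k as [|k IH].
  - simpl. rewrite Rmult_0_l. apply exp_0.
  - rewrite S_INR. replace ((INR k + 1) * t) with (INR k * t + t) by ring.
    rewrite exp_plus, IH. simpl. ring.
Qed.

Lemma key_real (m : nat) : (2 <= m)%nat ->
  (INR m + 2) ^ (2*m+1) < (INR m + 1) ^ (2*m+3).
Proof.
  intros Hm.
  assert (HM : 3 <= INR m + 1).
  { apply le_INR in Hm. simpl in Hm. lra. }
  set (M := INR m + 1) in *.
  set (t := / M).
  assert (Ht : 0 < t) by (unfold t; apply Rinv_0_lt_compat; lra).
  assert (E : INR m + 2 = M * (1 + t)).
  { unfold t. assert (INR m = M - 1) by (unfold M; ring). rewrite H. field. lra. }
  rewrite E, Rpow_mult_distr.
  replace (2*m+3)%nat with ((2*m+1) + 2)%nat by lia.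
  rewrite (pow_add M (2*m+1) 2).
  apply Rmult_lt_compat_l. { apply pow_lt; lra. }
  apply Rle_lt_trans with (exp t ^ (2*m+1)).
  { apply pow_incr. split. lra. left. apply exp_ineq1. lra. }
  rewrite <- exp_pow_k.
  apply Rlt_le_trans with (exp 2).
  { apply exp_increasing. unfold t.
    rewrite plus_INR, mult_INR. simpl.
    assert (INR m = M - 1) by (unfold M; ring).
    rewrite H. apply Rmult_lt_reg_r with M. lra.
    rewrite Rmult_assoc, Rinv_l by lra. lra. }
  replace 2 with (1 + 1) by ring. rewrite exp_plus.
  pose proof exp_le_3. pose proof (exp_pos 1).
  simpl. nra.
Qed.

Lemma key_nat (m : nat) : (1 <= m)%nat ->
  ((m+2) ^ (2*m+1) < (m+1) ^ (2*m+3))%nat.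
Proof.
  intros Hm.
  destruct (Nat.eq_dec m 1) as [->|Hne]. { simpl. lia. }
  apply INR_lt. rewrite !pow_INR, !plus_INR. simpl.
  replace (1+1) with 2 by ring.
  apply key_real. lia.
Qed.

Lemma div_even (m : nat) : Nat.div ((2*m + 2) * (2*m + 2)) 4 = ((m+1)*(m+1))%nat.
Proof. symmetry. apply (Nat.div_unique _ _ _ 0); nia. Qed.

Lemma div_odd (m : nat) : Nat.div ((2*m + 1 + 2) * (2*m + 1 + 2)) 4 = ((m+1)*(m+2))%nat.
Proof. symmetry. apply (Nat.div_unique _ _ _ 1); nia. Qed.

Lemma nat_facts (q : nat) : (2 <= q)%nat ->
  let x := Nat.div ((q + 2) * (q + 2)) 4 in
  let y := Nat.div ((S q + 2) * (S q + 2)) 4 in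
  (2 <= x)%nat /\ (x < y)%nat /\ (y ^ (q+1) < x ^ (q+2))%nat.
Proof.
  intros Hq x y.
  destruct (Nat.Even_or_Odd q) as [[m Hm]|[m Hm]]; subst q.
  - assert (Ex : x = ((m+1)*(m+1))%nat) by (unfold x; apply div_even).
    assert (Ey : y = ((m+1)*(m+2))%nat).
    { unfold y. replace (S (2*m)) with (2*m+1)%nat by lia. apply div_odd. }
    rewrite Ex, Ey. split; [nia|split; [nia|]].
    rewrite !Nat.pow_mul_l.
    replace ((m + 1) ^ (2 * m + 2) * (m + 1) ^ (2 * m + 2))%nat
      with ((m+1)^(2*m+1) * (m+1)^(2*m+3))%nat
      by (rewrite <- !Nat.pow_add_r; f_equal; lia).
    apply Nat.mul_lt_mono_pos_l. { apply Nat.neq_0_lt_0, Nat.pow_nonzero; lia. }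
    apply key_nat. lia.
  - assert (Ex : x = ((m+1)*(m+2))%nat) by (unfold x; apply div_odd).
    assert (Ey : y = ((m+2)*(m+2))%nat).
    { unfold y. replace (S (2*m+1) + 2)%nat with (2*(m+1)+2)%nat by lia.
      rewrite div_even. f_equal; lia. }
    rewrite Ex, Ey. split; [nia|split; [nia|]].
    rewrite !Nat.pow_mul_l.
    replace ((m + 2) ^ (2 * m + 1 + 1) * (m + 2) ^ (2 * m + 1 + 1))%nat
      with ((m+2)^(2*m+3) * (m+2)^(2*m+1))%nat
      by (rewrite <- !Nat.pow_add_r; f_equal; lia).
    replace (2 * m + 1 + 2)%nat with (2*m+3)%nat by lia.
    rewrite (Nat.mul_comm ((m+1)^_)).
    apply Nat.mul_lt_mono_pos_l. { apply Nat.neq_0_lt_0, Nat.pow_nonzero; lia. }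
    apply key_nat. lia.
Qed.

Lemma ln_sqrt' (X : R) : 0 < X -> ln (sqrt X) = ln X / 2.
Proof.
  intros HX.
  assert (Hs : 0 < sqrt X) by (apply sqrt_lt_R0; lra).
  assert (ln X = ln (sqrt X) + ln (sqrt X)).
  { rewrite <- ln_mult by lra. rewrite sqrt_sqrt; lra. }
  lra.
Qed.

Theorem lemma2p12 (r : R) (hr0 : 0 <= r) (hr1 : r <= 1) :
  forall q : nat, (2 <= q)%nat -> a r (S q) < a r q.
Proof.
  intros q Hq.
  destruct (nat_facts q Hq) as (H2 & Hxy & Hp).
  set (x := Nat.div ((q + 2) * (q + 2)) 4) in *.
  set (y := Nat.div ((S q + 2) * (S q + 2)) 4) in *.
  unfold a, c, Rpower. fold x y.
  assert (HX : 2 <= INR x) by (apply le_INR in H2; simpl in H2; lra).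
  assert (HXY : INR x < INR y) by (apply lt_INR; auto).
  assert (HP : INR y ^ (q+1) < INR x ^ (q+2)).
  { rewrite <- !pow_INR. apply lt_INR; auto. }
  rewrite !ln_sqrt' by lra.
  apply exp_increasing.
  assert (L1 : 0 < ln (INR x)) by (rewrite <- ln_1; apply ln_increasing; lra).
  assert (L2 : ln (INR x) < ln (INR y)) by (apply ln_increasing; lra).
  assert (L3 : INR (q+1) * ln (INR y) < INR (q+2) * ln (INR x)).
  { rewrite <- !ln_pow by lra. apply ln_increasing; auto. apply pow_lt; lra. }
  rewrite !plus_INR in L3. simpl in L3. rewrite S_INR.
  assert (Hq' : 2 <= INR q) by (apply le_INR in Hq; simpl in Hq; lra).
  set (A := INR q + r). set (lx := ln (INR x)) in *. set (ly := ln (INR y)) in *.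
  assert (HA : 0 < A) by (unfold A; lra).
  assert (K : A * ly < (A + 1) * lx).
  { unfold A. nra. }
  replace (INR q + 1 + r) with (A + 1) by (unfold A; ring).
  replace (1 / (A + 1) * (ly / 2)) with ((A * ly) * / (2 * A * (A+1))) by (field; lra).
  replace (1 / A * (lx / 2)) with (((A+1) * lx) * / (2 * A * (A+1))) by (field; lra).
  apply Rmult_lt_compat_r; auto.
  apply Rinv_0_lt_compat. nra.
Qed.
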